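(* Let $I$ be an integral on $R$. Then $\mu_I$, given by $\mu_I(D(a)):=\sup_{n\in\mathbb{N}}I(na^+\wedge1)$, is well defined on $\mathrm{Spec}(R)$ (if $D(a)=D(b)$ in $\mathrm{Spec}(R)$ then the two suprema coincide) and is a valuation on $\mathrm{Spec}(R)$.
   Context: $R$ is a Riesz space over $\mathbb{Q}$ with strong unit $1$; $a^+=a\vee0$; rationals are identified with multiples of $1$. $\mathrm{Spec}(R)$ is the distributive lattice generated by symbols $D(a)$, $a\in R$, subject to $D(1)=1$; $D(a)\wedge D(-a)=0$; $D(a+b)\le D(a)\vee D(b)$; $D(a)=0$ if $a\le0$; $D(a\vee b)=D(a)\vee D(b)$; every element is of the form $D(a)$, and $D(a)\le D(b)$ iff $a^+\le nb^+$ for some $n$. An integral is a positive linear map $I:R\to\mathbb{R}$ (Dedekind reals) with $I(1)=1$. The supremum of a set of reals is taken as a lower real (lower reals: inhabited, downward closed, rounded sets of rationals). A valuation is a map $\mu$ from $\mathrm{Spec}(R)$ to nonnegative lower reals with $\mu(0)=0$, $\mu(1)=1$, $\mu(x)+\mu(y)=\mu(x\vee y)+\mu(x\wedge y)$, monotone, and $\mu(D(a))\le\bigvee_{\varepsilon>0,\varepsilon\in\mathbb{Q}}\mu(D(a-\varepsilon))$. *)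

(* Defs.v *)
From Stdlib Require Import QArith Reals.
From Stdlib Require Import Qreals.

Open Scope Q_scope.

Record Riesz := {
  car :> Type;
  zero : car;
  add : car -> car -> car;
  opp : car -> car;
  smul : Q -> car -> car;
  le : car -> car -> Prop;
  join : car -> car -> car;
  meet : car -> car -> car;
  one : car;
  addA : forall x y z, add x (add y z) = add (add x y) z;
  addC : forall x y, add x y = add y x;
  add0 : forall x, add zero x = x;
  addN : forall x, add (opp x) x = zero;
  smul_Qeq : forall p q x, p == q -> smul p x = smul q x;
  smul1 : forall x, smul 1 x = x;
  smulA : forall p q x, smul p (smul q x) = smul (p * q) x;
  smulDr : forall q x y, smul q (add x y) = add (smul q x) (smul q y);
  smulDl : forall p q x, smul (p + q) x = add (smul p x) (smul q x);
  le_refl : forall x, le x x;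
  le_antisym : forall x y, le x y -> le y x -> x = y;
  le_trans : forall x y z, le x y -> le y z -> le x z;
  le_add : forall x y z, le x y -> le (add x z) (add y z);
  le_smul : forall q x y, 0 <= q -> le x y -> le (smul q x) (smul q y);
  join_l : forall x y, le x (join x y);
  join_r : forall x y, le y (join x y);
  join_lub : forall x y z, le x z -> le y z -> le (join x y) z;
  meet_l : forall x y, le (meet x y) x;
  meet_r : forall x y, le (meet x y) y;
  meet_glb : forall x y z, le z x -> le z y -> le z (meet x y);
  one_pos : le zero one;
  one_strong : forall a, exists n : nat, le a (smul (inject_Z (Z.of_nat n)) one)
}.

Arguments zero {r}. Arguments add {r}. Arguments opp {r}. Arguments smul {r}.
Arguments le {r}. Arguments join {r}. Arguments meet {r}. Arguments one {r}.

Section RieszDefs.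
Variable A : Riesz.

Definition pos (a : A) : A := join a zero.
Definition nmul (n : nat) (a : A) : A := smul (inject_Z (Z.of_nat n)) a.
(** the rational [q] identified with [q * 1] *)
Definition qc (q : Q) : A := smul q one.
Definition sub (a b : A) : A := add a (opp b).

(** Order on Spec(R): D(a) <= D(b) iff a^+ <= n b^+ for some n
    (every element of Spec(R) is of the form D(a)). *)
Definition spec_le (a b : A) : Prop := exists n : nat, le (pos a) (nmul n (pos b)).
Definition spec_eq (a b : A) : Prop := spec_le a b /\ spec_le b a.
(** D(j) = D(a) \/ D(b) and D(m) = D(a) /\ D(b) in Spec(R) *)
Definition spec_is_join (a b j : A) : Prop :=
  spec_le a j /\ spec_le b j /\ forall c, spec_le a c -> spec_le b c -> spec_le j c.
Definition spec_is_meet (a b m : A) : Prop :=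
  spec_le m a /\ spec_le m b /\ forall c, spec_le c a -> spec_le c b -> spec_le c m.

Definition is_integral (I : A -> R) : Prop :=
  (forall x y, I (add x y) = (I x + I y)%R) /\
  (forall q x, I (smul q x) = (Q2R q * I x)%R) /\
  (forall x, le zero x -> (0 <= I x)%R) /\
  I one = 1%R.
End RieszDefs.

(** Lower reals: inhabited, downward closed, rounded sets of rationals. *)
Definition lreal := Q -> Prop.
Definition is_lreal (x : lreal) : Prop :=
  (exists q, x q) /\
  (forall p q, p <= q -> x q -> x p) /\
  (forall q, x q -> exists p, q < p /\ x p).
Definition lr_of_Q (r : Q) : lreal := fun q => q < r.
Definition lr_le (x y : lreal) : Prop := forall q, x q -> y q.
Definition lr_eq (x y : lreal) : Prop := forall q, x q <-> y q.
Definition lr_add (x y : lreal) : lreal :=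
  fun r => exists p q, x p /\ y q /\ r <= p + q.
Definition lr_nonneg (x : lreal) : Prop := lr_le (lr_of_Q 0) x.

(** Supremum of a family of reals, as a lower real. *)
Definition sup_nat_R (f : nat -> R) : lreal := fun q => exists n, (Q2R q < f n)%R.

(** mu_I(D(a)) := sup_n I(n a^+ /\ 1), computed on a representative a. *)
Definition mu_I (A : Riesz) (I : A -> R) (a : A) : lreal :=
  sup_nat_R (fun n => I (meet (nmul A n (pos A a)) one)).

Definition spec_well_defined (A : Riesz) (m : A -> lreal) : Prop :=
  forall a b, spec_eq A a b -> lr_eq (m a) (m b).

(** Valuation on Spec(R), given by its values on representatives D(a). *)
Definition is_valuation (A : Riesz) (m : A -> lreal) : Prop :=
  (forall a, is_lreal (m a) /\ lr_nonneg (m a)) /\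
  lr_eq (m zero) (lr_of_Q 0) /\
  lr_eq (m one) (lr_of_Q 1) /\
  (forall a b j k, spec_is_join A a b j -> spec_is_meet A a b k ->
     lr_eq (lr_add (m a) (m b)) (lr_add (m j) (m k))) /\
  (forall a b, spec_le A a b -> lr_le (m a) (m b)) /\
  (forall a, lr_le (m a)
     (fun q => exists eps : Q, 0 < eps /\ m (sub A a (qc A eps)) q)).

(* Main.v *)
Require Import Defs.
From Stdlib Require Import QArith Reals Qreals Lra Lia ZArith.

Arguments addA {r}. Arguments addC {r}. Arguments add0 {r}. Arguments addN {r}.
Arguments smul_Qeq {r}. Arguments smul1 {r}. Arguments smulA {r}. Arguments smulDr {r}. Arguments smulDl {r}.
Arguments le_refl {r}. Arguments le_antisym {r}. Arguments le_trans {r}. Arguments le_add {r}. Arguments le_smul {r}.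
Arguments join_l {r}. Arguments join_r {r}. Arguments join_lub {r}. Arguments meet_l {r}. Arguments meet_r {r}. Arguments meet_glb {r}.
Arguments one_pos {r}. Arguments one_strong {r}.

Section Alg.
Context {A : Riesz}.
Implicit Types x y z u v t : car A.

Lemma add0r x : add x zero = x.
Proof. rewrite addC; apply add0. Qed.
Lemma addNr x : add x (opp x) = zero.
Proof. rewrite addC; apply addN. Qed.
Lemma addKl z x : add (opp z) (add z x) = x.
Proof. rewrite addA, addN, add0; reflexivity. Qed.
Lemma add_cancel z x y : add z x = add z y -> x = y.
Proof. intro H. rewrite <- (addKl z x), <- (addKl z y), H; reflexivity. Qed.
Lemma le_add_l z x y : le x y -> le (add z x) (add z y).
Proof. intro H. rewrite (addC z x), (addC z y). now apply le_add. Qed.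
Lemma le_add2 x y u v : le x y -> le u v -> le (add x u) (add y v).
Proof. intros H1 H2. eapply le_trans. apply le_add; exact H1. apply le_add_l; exact H2. Qed.
Lemma le_add_cancel x y z : le (add x z) (add y z) -> le x y.
Proof. intro H. apply (le_add _ _ (opp z)) in H.
  rewrite <- !addA, addNr, !add0r in H. exact H. Qed.
Lemma le_opp x y : le x y -> le (opp y) (opp x).
Proof. intro H. apply (le_add _ _ (add (opp x) (opp y))) in H.
  rewrite (addA x (opp x)), addNr, add0 in H.
  rewrite (addC (opp x) (opp y)), (addA y (opp y)), addNr, add0 in H. exact H. Qed.
Lemma opp_opp x : opp (opp x) = x.
Proof. apply (add_cancel (opp x)). rewrite addNr, addN. reflexivity. Qed.
Lemma opp_add x y : opp (add x y) = add (opp x) (opp y).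
Proof. apply (add_cancel (add x y)). rewrite addNr.
  rewrite (addC (opp x) (opp y)), <- addA, (addA y), addNr, add0, addNr. reflexivity. Qed.

Lemma smul0 x : smul 0 x = zero.
Proof. apply (add_cancel (smul 0 x)). rewrite add0r, <- smulDl.
  apply smul_Qeq. reflexivity. Qed.
Lemma smulq0 q : smul q (@zero A) = zero.
Proof. apply (add_cancel (smul q zero)). rewrite add0r, <- smulDr, add0. reflexivity. Qed.
Lemma smul_nonneg q x : 0 <= q -> le zero x -> le zero (smul q x).
Proof. intros Hq H. rewrite <- (smulq0 q). now apply le_smul. Qed.

Lemma nmul0 x : nmul A 0 x = zero.
Proof. unfold nmul. apply smul0. Qed.
Lemma nmulS n x : nmul A (S n) x = add (nmul A n x) x.
Proof. unfold nmul. rewrite <- (smul1 x) at 3. rewrite <- smulDl. apply smul_Qeq.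
  rewrite Nat2Z.inj_succ. unfold Z.succ. rewrite inject_Z_plus. reflexivity. Qed.
Lemma nmul_nonneg n x : le zero x -> le zero (nmul A n x).
Proof. intro H. apply smul_nonneg; auto. unfold Qle; simpl. lia. Qed.
Lemma nmul_mono n m x : le zero x -> (n <= m)%nat -> le (nmul A n x) (nmul A m x).
Proof. intros H Hnm. induction Hnm. apply le_refl.
  rewrite nmulS. apply (le_trans _ _ _ IHHnm).
  match goal with |- le (nmul A ?k x) _ => rewrite <- (add0r (nmul A k x)) at 1 end.
  apply le_add_l. exact H. Qed.

Lemma meet_id x y : le x y -> meet x y = x.
Proof. intro H. apply le_antisym. apply meet_l. apply meet_glb; auto using le_refl. Qed.
Lemma join_id x y : le y x -> join x y = x.
Proof. intro H. apply le_antisym. apply join_lub; auto using le_refl. apply join_l. Qed.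
Lemma meetC x y : meet x y = meet y x.
Proof. apply le_antisym; apply meet_glb; auto using meet_l, meet_r. Qed.
Lemma joinC x y : join x y = join y x.
Proof. apply le_antisym; apply join_lub; auto using join_l, join_r. Qed.
Lemma meet_mono x y u v : le x u -> le y v -> le (meet x y) (meet u v).
Proof. intros H1 H2; apply meet_glb; [eapply le_trans;[apply meet_l|exact H1]|eapply le_trans;[apply meet_r|exact H2]]. Qed.
Lemma join_mono x y u v : le x u -> le y v -> le (join x y) (join u v).
Proof. intros H1 H2; apply join_lub; [eapply le_trans;[exact H1|apply join_l]|eapply le_trans;[exact H2|apply join_r]]. Qed.

Lemma meet_add x y z : add (meet x y) z = meet (add x z) (add y z).
Proof. apply le_antisym.
- apply meet_glb; apply le_add; auto using meet_l, meet_r.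
- apply (le_add_cancel _ _ (opp z)). rewrite <- (addA (meet x y)), addNr, add0r.
  apply meet_glb.
  + eapply le_trans; [apply le_add; apply meet_l|]. rewrite <- addA, addNr, add0r; apply le_refl.
  + eapply le_trans; [apply le_add; apply meet_r|]. rewrite <- addA, addNr, add0r; apply le_refl.
Qed.
Lemma join_add x y z : add (join x y) z = join (add x z) (add y z).
Proof. apply le_antisym.
- apply (le_add_cancel _ _ (opp z)). rewrite <- (addA (join x y)), addNr, add0r.
  apply join_lub.
  + eapply le_trans; [|apply le_add; apply join_l]. rewrite <- addA, addNr, add0r; apply le_refl.
  + eapply le_trans; [|apply le_add; apply join_r]. rewrite <- addA, addNr, add0r; apply le_refl.
- apply join_lub; apply le_add; auto using join_l, join_r.
Qed.
Lemma opp_join x y : opp (join x y) = meet (opp x) (opp y).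
Proof. apply le_antisym.
- apply meet_glb; apply le_opp; auto using join_l, join_r.
- rewrite <- (opp_opp (meet _ _)). apply le_opp. apply join_lub.
  + rewrite <- (opp_opp x) at 1. apply le_opp, meet_l.
  + rewrite <- (opp_opp y) at 1. apply le_opp, meet_r.
Qed.
Lemma join_meet x y : add (join x y) (meet x y) = add x y.
Proof.
  assert (H : add (add x y) (opp (join x y)) = meet y x).
  { rewrite opp_join, addC, meet_add. rewrite (addA (opp x)), addN, add0.
    rewrite (addC x y), (addA (opp y)), addN, add0. reflexivity. }
  rewrite meetC, <- H. rewrite addC, <- addA, addN, add0r. reflexivity.
Qed.

Lemma meetA x y z : meet x (meet y z) = meet (meet x y) z.
Proof. apply le_antisym; repeat apply meet_glb;
  eauto using le_trans, meet_l, meet_r. Qed.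

Lemma distr_aux t b c : le t (join b c) -> le t (join (meet t b) (meet t c)).
Proof. intro H.
  set (u := meet t b). set (v := meet t c).
  assert (E : join u v = add (add u v) (opp (meet u v))).
  { apply (add_cancel (meet u v)). rewrite (addC (meet u v) (join u v)), join_meet.
    rewrite (addC (add u v) (opp _)), addA, addNr, add0. reflexivity. }
  rewrite E. apply (le_add_cancel _ _ (meet u v)).
  rewrite <- addA, addN, add0r.
  assert (Muv : meet u v = meet t (meet b c)).
  { unfold u, v. apply le_antisym; repeat apply meet_glb;
    eauto using le_trans, meet_l, meet_r. }
  rewrite Muv.
  (* t + (t /\ b /\ c) <= (t/\b) + (t/\c) *)
  unfold u, v. rewrite (meet_add t b), (addC t (meet t c)), (addC b (meet t c)), !meet_add.
  rewrite (addC t (meet t (meet b c))), meet_add.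
  apply meet_glb; [apply meet_glb|apply meet_glb].
  - apply meet_l.
  - eapply le_trans. apply meet_r. apply le_add. apply meet_r.
  - eapply le_trans. apply meet_r. rewrite (addC t b). apply le_add. apply meet_l.
  - eapply le_trans. apply meet_r. rewrite addC, (addC c b), <- (join_meet b c).
    apply le_add; exact H.
Qed.

Lemma distr t b c : meet t (join b c) = join (meet t b) (meet t c).
Proof. apply le_antisym.
  - eapply le_trans. apply distr_aux. apply meet_r.
    apply join_mono; apply meet_mono; first [apply meet_l|apply le_refl].
  - apply join_lub; apply meet_mono; auto using le_refl, join_l, join_r.
Qed.
End Alg.

Lemma Q_dense (x y : R) : (x < y)%R -> exists q : Q, (x < Q2R q < y)%R.
Proof. intro Hxy.
  set (d := (y - x)%R).
  assert (Hd : (0 < d)%R) by (unfold d; lra).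
  destruct (archimed (/ d)) as [H1 _].
  set (z := up (/ d)) in *.
  assert (Hz : (0 < IZR z)%R). { pose proof (Rinv_0_lt_compat d Hd). lra. }
  assert (Hzpos : (0 < z)%Z) by (apply lt_0_IZR; exact Hz).
  destruct (archimed (x * IZR z)) as [H2 H3].
  set (m := up (x * IZR z)) in *.
  exists (Qmake m (Z.to_pos z)).
  unfold Q2R; simpl. rewrite Z2Pos.id by exact Hzpos.
  split.
  - apply (Rmult_lt_reg_r (IZR z)); auto. rewrite Rmult_assoc, Rinv_l by lra. lra.
  - apply (Rmult_lt_reg_r (IZR z)); auto. rewrite Rmult_assoc, Rinv_l by lra.
    rewrite Rmult_1_r.
    assert (d * IZR z > 1)%R.
    { apply (Rmult_lt_reg_l (/ d)). apply Rinv_0_lt_compat; lra.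
      rewrite <- Rmult_assoc, Rinv_l, Rmult_1_l, Rmult_1_r by lra. lra. }
    unfold d in H. nra.
Qed.

Lemma Q2R_nat (n : nat) : Q2R (inject_Z (Z.of_nat n)) = INR n.
Proof. unfold Q2R; simpl. rewrite INR_IZR_INZ. lra. Qed.

Section Int.
Context {A : Riesz} (I : A -> R) (HI : is_integral A I).
Implicit Types x y z u v t a b c : car A.

Lemma smul_meet q x y : 0 <= q -> smul q (meet x y) = meet (smul q x) (smul q y).
Proof. intro Hq. destruct (Qeq_dec q 0) as [E|E].
- rewrite !(smul_Qeq q 0 _ E), !smul0. symmetry; apply meet_id, le_refl.
- assert (Hq' : 0 < q) by (apply Qle_lt_or_eq in Hq; destruct Hq; auto; exfalso; apply E; symmetry; auto).
  apply le_antisym.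
  + apply meet_glb; apply le_smul; auto; [apply meet_l|apply meet_r].
  + set (M := meet (smul q x) (smul q y)).
    assert (Hi : 0 <= / q) by (apply Qlt_le_weak, Qinv_lt_0_compat; auto).
    assert (HM : smul q (smul (/ q) M) = M).
    { rewrite smulA, (smul_Qeq _ 1), smul1; [reflexivity|]. apply Qmult_inv_r; auto. }
    rewrite <- HM. apply le_smul; auto. apply meet_glb.
    * rewrite <- (smul1 x), <- (smul_Qeq (/q * q) 1), <- smulA. apply le_smul; auto. apply meet_l.
      rewrite Qmult_comm; apply Qmult_inv_r; auto.
    * rewrite <- (smul1 y), <- (smul_Qeq (/q * q) 1), <- smulA. apply le_smul; auto. apply meet_r.
      rewrite Qmult_comm; apply Qmult_inv_r; auto.
Qed.
Lemma smul_join q x y : 0 <= q -> smul q (join x y) = join (smul q x) (smul q y).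
Proof. intro Hq. destruct (Qeq_dec q 0) as [E|E].
- rewrite !(smul_Qeq q 0 _ E), !smul0. symmetry; apply join_id, le_refl.
- assert (Hq' : 0 < q) by (apply Qle_lt_or_eq in Hq; destruct Hq; auto; exfalso; apply E; symmetry; auto).
  apply le_antisym.
  + set (M := join (smul q x) (smul q y)).
    assert (Hi : 0 <= / q) by (apply Qlt_le_weak, Qinv_lt_0_compat; auto).
    assert (HM : smul q (smul (/ q) M) = M).
    { rewrite smulA, (smul_Qeq _ 1), smul1; [reflexivity|]. apply Qmult_inv_r; auto. }
    rewrite <- HM. apply le_smul; auto. apply join_lub.
    * rewrite <- (smul1 x) at 1. rewrite <- (smul_Qeq (/q * q) 1), <- smulA. apply le_smul; auto. apply join_l.
      rewrite Qmult_comm; apply Qmult_inv_r; auto.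
    * rewrite <- (smul1 y) at 1. rewrite <- (smul_Qeq (/q * q) 1), <- smulA. apply le_smul; auto. apply join_r.
      rewrite Qmult_comm; apply Qmult_inv_r; auto.
  + apply join_lub; apply le_smul; auto; [apply join_l|apply join_r].
Qed.

Lemma nat_Qnonneg n : 0 <= inject_Z (Z.of_nat n).
Proof. unfold Qle; simpl. lia. Qed.

Lemma nmul_le n x y : le x y -> le (nmul A n x) (nmul A n y).
Proof. intro H. apply le_smul; auto using nat_Qnonneg. Qed.
Lemma nmul_mul n k x : nmul A n (nmul A k x) = nmul A (n * k) x.
Proof. unfold nmul. rewrite smulA. apply smul_Qeq. rewrite Nat2Z.inj_mul, inject_Z_mult. reflexivity. Qed.
Lemma nmul1 x : nmul A 1 x = x.
Proof. unfold nmul. rewrite (smul_Qeq _ 1), smul1; reflexivity. Qed.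

Lemma pos_nonneg a : le zero (Defs.pos A a).
Proof. apply join_r. Qed.
Lemma pos_id x : le zero x -> Defs.pos A x = x.
Proof. intro H. apply join_id; auto. Qed.

Lemma I_add x y : I (add x y) = (I x + I y)%R.
Proof. apply HI. Qed.
Lemma I_smul q x : I (smul q x) = (Q2R q * I x)%R.
Proof. apply HI. Qed.
Lemma I_zero : I zero = 0%R.
Proof. pose proof (I_add zero zero). rewrite add0 in H. lra. Qed.
Lemma I_opp x : I (opp x) = (- I x)%R.
Proof. pose proof (I_add (opp x) x). rewrite addN, I_zero in H. lra. Qed.
Lemma I_one : I one = 1%R.
Proof. apply HI. Qed.
Lemma I_mono x y : le x y -> (I x <= I y)%R.
Proof. intro H. assert (H0 : le zero (add y (opp x))).
  { rewrite <- (addNr x). apply le_add; auto. }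
  destruct HI as (_&_&Hp&_). apply Hp in H0. rewrite I_add, I_opp in H0. lra. Qed.

Definition fa (a : A) (n : nat) : R := I (meet (nmul A n (Defs.pos A a)) one).

Lemma fa_mono a n m : (n <= m)%nat -> (fa a n <= fa a m)%R.
Proof. intro H. apply I_mono, meet_mono; auto using le_refl. apply nmul_mono; auto using pos_nonneg. Qed.
Lemma fa0 a : fa a 0 = 0%R.
Proof. unfold fa. rewrite nmul0, meet_id; auto using one_pos. apply I_zero. Qed.
Lemma fa_nonneg a n : (0 <= fa a n)%R.
Proof. rewrite <- (fa0 a). apply fa_mono. lia. Qed.
Lemma fa_le1 a n : (fa a n <= 1)%R.
Proof. rewrite <- I_one. apply I_mono, meet_r. Qed.

Lemma fa_spec a b : spec_le A a b -> forall n, exists m, (fa a n <= fa b m)%R.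
Proof. intros [k Hk] n. exists (n * k)%nat. apply I_mono, meet_mono; auto using le_refl.
  rewrite <- nmul_mul. apply nmul_le. exact Hk. Qed.

End Int.

Definition incr (f : nat -> R) := forall n m, (n <= m)%nat -> (f n <= f m)%R.

Lemma sup_add f g : incr f -> incr g ->
  lr_eq (lr_add (sup_nat_R f) (sup_nat_R g)) (sup_nat_R (fun n => f n + g n)%R).
Proof. intros Hf Hg r. split.
- intros (p & q & [n Hn] & [m Hm] & Hr). exists (Nat.max n m).
  apply Qle_Rle in Hr. rewrite Q2R_plus in Hr.
  pose proof (Hf n (Nat.max n m) ltac:(lia)). pose proof (Hg m (Nat.max n m) ltac:(lia)). lra.
- intros [n Hn]. destruct (Q_dense (Q2R r - g n) (f n)) as [p Hp]; [lra|].
  exists p, (r - p). split; [exists n; lra|]. split.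
  + exists n. rewrite Q2R_minus. lra.
  + apply Qle_lteq; right; ring.
Qed.

Lemma lr_add_eq x y x' y' : lr_eq x x' -> lr_eq y y' -> lr_eq (lr_add x y) (lr_add x' y').
Proof. intros H1 H2 r. split; intros (p&q&Hp&Hq&Hr); exists p, q;
  repeat split; auto; [apply H1|apply H2|apply H1|apply H2]; auto. Qed.

Lemma lr_eq_trans x y z : lr_eq x y -> lr_eq y z -> lr_eq x z.
Proof. intros H1 H2 r. rewrite (H1 r); apply H2. Qed.
Lemma lr_eq_sym x y : lr_eq x y -> lr_eq y x.
Proof. intros H r. symmetry; apply H. Qed.

Section Main.
Context {A : Riesz} (I : A -> R) (HI : is_integral A I).

Lemma mu_mono a b : spec_le A a b -> lr_le (mu_I A I a) (mu_I A I b).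
Proof. intros H q [n Hn]. destruct (fa_spec I HI a b H n) as [m Hm].
  exists m. unfold fa in Hm. lra. Qed.

Lemma mu_wd : spec_well_defined A (mu_I A I).
Proof. intros a b [H1 H2] q. split; [apply mu_mono|apply mu_mono]; auto. Qed.

Lemma nonneg_pos x : le zero x -> le zero (Defs.pos A x).
Proof. intros. rewrite pos_id; auto. Qed.

Definition J0 (a b : A) := join (Defs.pos A a) (Defs.pos A b).
Definition K0 (a b : A) := meet (Defs.pos A a) (Defs.pos A b).

Lemma J0_nonneg a b : le zero (J0 a b).
Proof. eapply le_trans. apply (pos_nonneg a). apply join_l. Qed.
Lemma K0_nonneg a b : le zero (K0 a b).
Proof. apply meet_glb; apply pos_nonneg. Qed.

Lemma J0_join a b : spec_is_join A a b (J0 a b).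
Proof. split; [|split].
- exists 1%nat. rewrite nmul1, (pos_id (J0 a b)) by apply J0_nonneg. apply join_l.
- exists 1%nat. rewrite nmul1, (pos_id (J0 a b)) by apply J0_nonneg. apply join_r.
- intros c [n Hn] [m Hm]. exists (n + m)%nat. rewrite (pos_id (J0 a b)) by apply J0_nonneg.
  apply join_lub.
  + eapply le_trans. exact Hn. apply nmul_mono. apply pos_nonneg. lia.
  + eapply le_trans. exact Hm. apply nmul_mono. apply pos_nonneg. lia.
Qed.

Lemma K0_meet a b : spec_is_meet A a b (K0 a b).
Proof. split; [|split].
- exists 1%nat. rewrite nmul1, (pos_id (K0 a b)) by apply K0_nonneg. apply meet_l.
- exists 1%nat. rewrite nmul1, (pos_id (K0 a b)) by apply K0_nonneg. apply meet_r.
- intros c [n Hn] [m Hm]. exists (n + m)%nat. rewrite (pos_id (K0 a b)) by apply K0_nonneg.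
  unfold K0, nmul. rewrite smul_meet by apply nat_Qnonneg. apply meet_glb.
  + eapply le_trans. exact Hn. apply nmul_mono. apply pos_nonneg. lia.
  + eapply le_trans. exact Hm. apply nmul_mono. apply pos_nonneg. lia.
Qed.

Lemma join_unique a b j j' : spec_is_join A a b j -> spec_is_join A a b j' -> spec_eq A j j'.
Proof. intros (H1&H2&H3) (H1'&H2'&H3'). split; auto. Qed.
Lemma meet_unique a b j j' : spec_is_meet A a b j -> spec_is_meet A a b j' -> spec_eq A j j'.
Proof. intros (H1&H2&H3) (H1'&H2'&H3'). split; auto. Qed.

Lemma lattice_id (x y : A) :
  add (meet (join x y) one) (meet (meet x y) one) = add (meet x one) (meet y one).
Proof.
  rewrite <- (join_meet (meet x one) (meet y one)). f_equal.
  - symmetry. rewrite (meetC (join x y) one), distr, (meetC one x), (meetC one y). reflexivity.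
  - apply le_antisym; repeat apply meet_glb;
    first [apply meet_l|apply meet_r|
      (eapply le_trans; [apply meet_l|]; first [apply meet_l|apply meet_r])|
      (eapply le_trans; [apply meet_r|]; first [apply meet_l|apply meet_r])].
Qed.

Lemma fa_modular a b n :
  (fa I a n + fa I b n = fa I (J0 a b) n + fa I (K0 a b) n)%R.
Proof. unfold fa. rewrite <- !I_add by exact HI.
  rewrite (pos_id (J0 a b)) by apply J0_nonneg. rewrite (pos_id (K0 a b)) by apply K0_nonneg.
  unfold J0, K0, nmul. rewrite smul_join, smul_meet by apply nat_Qnonneg.
  rewrite lattice_id. reflexivity. Qed.

Lemma fa_incr a : incr (fa I a).
Proof. intros n m. apply fa_mono; auto. Qed.

Lemma mu_modular a b j k : spec_is_join A a b j -> spec_is_meet A a b k ->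
  lr_eq (lr_add (mu_I A I a) (mu_I A I b)) (lr_add (mu_I A I j) (mu_I A I k)).
Proof. intros Hj Hk.
  apply lr_eq_trans with (lr_add (mu_I A I (J0 a b)) (mu_I A I (K0 a b))).
  2:{ apply lr_add_eq; apply mu_wd; [eapply join_unique|eapply meet_unique]; eauto using J0_join, K0_meet. }
  unfold mu_I. fold (fa I a). fold (fa I b). fold (fa I (J0 a b)). fold (fa I (K0 a b)).
  eapply lr_eq_trans. apply sup_add; apply fa_incr.
  eapply lr_eq_trans. 2:{ apply lr_eq_sym. apply sup_add; apply fa_incr. }
  intro q. unfold sup_nat_R. split; intros [n Hn]; exists n; [rewrite <- fa_modular|rewrite fa_modular]; exact Hn.
Qed.

End Main.

Section Main2.
Context {A : Riesz} (I : A -> R) (HI : is_integral A I).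

Lemma mu_lreal a : is_lreal (mu_I A I a) /\ lr_nonneg (mu_I A I a).
Proof. change (mu_I A I a) with (sup_nat_R (fa I a)). split; [split; [|split]|].
- exists (-1)%Q. exists 0%nat. rewrite (fa0 I HI a).
  replace (Q2R (-1)) with (-1)%R by (unfold Q2R; simpl; lra). lra.
- intros p q Hpq [n Hn]. exists n. apply Qle_Rle in Hpq. lra.
- intros q [n Hn]. destruct (Q_dense (Q2R q) (fa I a n) Hn) as [p Hp].
  exists p. split. apply Rlt_Qlt; lra. exists n; lra.
- intros q Hq. unfold lr_of_Q in Hq. exists 0%nat. rewrite (fa0 I HI a).
  apply Qlt_Rlt in Hq. rewrite RMicromega.Q2R_0 in Hq. exact Hq.
Qed.

Lemma mu_zero : lr_eq (mu_I A I zero) (lr_of_Q 0).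
Proof. intro q. unfold mu_I, sup_nat_R, lr_of_Q.
  assert (E : forall n, I (meet (nmul A n (Defs.pos A zero)) one) = 0%R).
  { intro n. rewrite (pos_id zero) by apply le_refl. unfold nmul. rewrite smulq0.
    rewrite meet_id by apply one_pos. apply (I_zero I HI). }
  split.
  - intros [n Hn]. rewrite E in Hn. apply Rlt_Qlt. rewrite RMicromega.Q2R_0. exact Hn.
  - intro Hq. exists 0%nat. rewrite E. apply Qlt_Rlt in Hq. rewrite RMicromega.Q2R_0 in Hq. exact Hq.
Qed.

Lemma mu_one : lr_eq (mu_I A I one) (lr_of_Q 1).
Proof. intro q. change (mu_I A I one) with (sup_nat_R (fa I one)). unfold sup_nat_R, lr_of_Q. split.
  - intros [n Hn]. pose proof (fa_le1 I HI one n). apply Rlt_Qlt. rewrite RMicromega.Q2R_1. lra.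
  - intro Hq. exists 1%nat. unfold fa. rewrite (pos_id one) by apply one_pos.
    rewrite nmul1, meet_id by apply le_refl. rewrite (I_one I HI).
    apply Qlt_Rlt in Hq. rewrite RMicromega.Q2R_1 in Hq. exact Hq.
Qed.

Lemma cont_alg (a : A) (eps : Q) n : 0 <= eps ->
  le (meet (nmul A n (Defs.pos A a)) one)
     (add (meet (nmul A n (Defs.pos A (sub A a (qc A eps)))) one) (nmul A n (qc A eps))).
Proof. intro He.
  assert (Hc : le zero (qc A eps)) by (apply smul_nonneg; auto; apply one_pos).
  rewrite meet_add. apply meet_mono.
  - unfold nmul. rewrite <- smulDr. apply le_smul. apply nat_Qnonneg.
    apply join_lub.
    + replace a with (add (sub A a (qc A eps)) (qc A eps)) at 1.
      * apply le_add. apply join_l.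
      * unfold sub. rewrite <- addA, addN, add0r. reflexivity.
    + rewrite <- (add0 zero). apply le_add2. apply pos_nonneg. exact Hc.
  - rewrite <- (add0r one) at 1. apply le_add_l. apply nmul_nonneg. exact Hc.
Qed.

Lemma mu_cont a : lr_le (mu_I A I a)
     (fun q => exists eps : Q, 0 < eps /\ mu_I A I (sub A a (qc A eps)) q).
Proof. change (mu_I A I a) with (sup_nat_R (fa I a)). intros q [n Hn].
  set (d := (fa I a n - Q2R q)%R).
  assert (Hd : (0 < d)%R) by (unfold d; lra).
  assert (Hn1 : (0 < INR n + 1)%R) by (pose proof (pos_INR n); lra).
  destruct (Q_dense 0 (d / (INR n + 1))) as [e [He1 He2]].
  { apply Rdiv_lt_0_compat; lra. }
  exists e. split. { apply Rlt_Qlt. rewrite RMicromega.Q2R_0. exact He1. }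
  exists n.
  pose proof (I_mono I HI _ _ (cont_alg a e n (Qlt_le_weak _ _ (Rlt_Qlt 0 e ltac:(rewrite RMicromega.Q2R_0; exact He1))))) as H.
  rewrite (I_add I HI) in H. unfold nmul, qc in H. rewrite (I_smul I HI), (I_smul I HI), (I_one I HI), Q2R_nat in H.
  unfold fa, nmul in Hn.
  assert (INR n * Q2R e < d)%R.
  { apply Rmult_lt_compat_r with (r := (INR n + 1)%R) in He2; auto.
    unfold Rdiv in He2. rewrite Rmult_assoc, Rinv_l, Rmult_1_r in He2 by lra.
    pose proof (pos_INR n). nra. }
  unfold d, fa, nmul, qc in *. lra.
Qed.

End Main2.

Theorem mainTheorem4 (A : Riesz) (I : A -> R) (HI : is_integral A I) :
  spec_well_defined A (mu_I A I) /\ is_valuation A (mu_I A I).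
Proof.
  split. apply (mu_wd I HI).
  split; [|split; [|split; [|split; [|split]]]].
  - apply (mu_lreal I HI).
  - apply (mu_zero I HI).
  - apply (mu_one I HI).
  - intros a b j k; apply (mu_modular I HI).
  - apply (mu_mono I HI).
  - apply (mu_cont I HI).
Qed.
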